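(* In the setting described in the context, for every $\alpha\in(0,1)$ and every almost surely finite $(\mathcal F_T)$-stopping time $\tau$, with $\alpha^{\mathsf B}=m\alpha/(2k)$, we have $\mathrm{sFCR}(\alpha^{\mathsf B})\le\alpha$.
   Context: Setting: $(\Omega,\mathcal F,\mathbb P)$ is a probability space with a filtration $(\mathcal F_T)_{T\in\mathbb N}$; $k\ge2$, $m\in\{1,\dots,k-1\}$, $\alpha\in(0,1)$; $\theta_1\ge\dots\ge\theta_k$ are real parameters; $[k]=\{1,\dots,k\}$. For each $i\in[k]$ and $\beta\in(0,1)$, $(L_{iT}(\beta))_{T}$ and $(U_{iT}(\beta))_T$ are $(\mathcal F_T)$-adapted processes with values in $[-\infty,\infty]$, with $L_{iT}(\beta)\le U_{iT}(\beta)$, satisfying $\mathbb P(\exists T\in\mathbb N:\theta_i\le L_{iT}(\beta))\le\beta$ and $\mathbb P(\exists T\in\mathbb N:\theta_i\ge U_{iT}(\beta))\le\beta$. No dependence assumptions across $i$. SCS procedure: set $\alpha_{km}=\alpha/\{2m(k-m)\}$, $\hat{\mathcal S}_0=[k]$, and for $T\in\mathbb N$ let $L^{(m)}_T(\alpha_{km})$ be the $m$-th largest among $\{L_{iT}(\alpha_{km}):i\in\hat{\mathcal S}_{T-1}\}$ and $\hat{\mathcal S}_T=\hat{\mathcal S}_{T-1}\setminus\{i\in\hat{\mathcal S}_{T-1}:U_{iT}(\alpha_{km})<L^{(m)}_T(\alpha_{km})\}$. Stopped false coverage rate: for a stopping time $\tau$ and a level $a\in(0,1)$, $\mathrm{sFCR}(a)=\mathbb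 E\Big[\sum_{i\in\hat{\mathcal S}_\tau}\frac{\mathbb I\{\theta_i\notin(L_{i\tau}(a),U_{i\tau}(a))\}}{|\hat{\mathcal S}_\tau|}\Big]$. *)

(* Defs.v *)
From HB Require Import structures.
From mathcomp Require Import all_boot all_order all_algebra.
From mathcomp Require Import all_classical all_reals all_analysis.
From mathcomp Require Import measurable_realfun.
Set Implicit Arguments. Unset Strict Implicit. Unset Printing Implicit Defensive.
Import Order.TTheory GRing.Theory Num.Theory.
Local Open Scope classical_set_scope.
Local Open Scope ring_scope.

Definition filtration d (T : measurableType d) (F : nat -> set (set T)) :=
  (forall t, sigma_algebra setT (F t)) /\
  (forall t, F t `<=` measurable) /\
  (forall t, F t `<=` F t.+1).

Definition adapted d (T : measurableType d) (R : realType)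
  (F : nat -> set (set T)) (X : nat -> T -> \bar R) :=
  forall (t : nat) (B : set (\bar R)), measurable B -> F t (X t @^-1` B).

(** Stopping time with values in {1,2,...} \cup {+oo} (None = +oo):
    {tau <= n} \in F n for all n. *)
Definition stopping_time d (T : measurableType d)
  (F : nat -> set (set T)) (tau : T -> option nat) :=
  (forall w, tau w <> Some 0%N) /\
  (forall n, F n [set w | exists t, tau w = Some t /\ (t <= n)%N]).

(** m-th largest element of a finite list of extended reals (counted with
    multiplicity); -oo if the list has fewer than m elements. *)
Definition mth_largest (R : realType) (m : nat) (s : seq (\bar R)) : \bar R :=
  nth -oo%E (sort (fun x y : \bar R => (y <= x)%O) s) m.-1.

(** The SCS selected sets hat S_t (t = 0,1,2,...), computed pathwise,
    with level a (= alpha_km). *)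
Fixpoint SCS d (T : measurableType d) (R : realType) (k m : nat)
  (L U : 'I_k -> R -> nat -> T -> \bar R) (a : R) (t : nat) (w : T)
  : {set 'I_k} :=
  match t with
  | 0%N => [set: 'I_k]%SET
  | t'.+1 =>
      let S := SCS m L U a t' w in
      let Lm := mth_largest m [seq L i a t w | i <- enum S] in
      (S :\: [set i in S | (U i a t w < Lm)%E])%SET
  end.

Definition FCP d (T : measurableType d) (R : realType) (k : nat)
  (theta : 'I_k -> R) (L U : 'I_k -> R -> nat -> T -> \bar R)
  (S : nat -> T -> {set 'I_k}) (tau : T -> option nat) (a : R) (w : T) : R :=
  match tau w with
  | Some n =>
      (\sum_(i in S n w)
         (if ((L i a n w < (theta i)%:E)%E && ((theta i)%:E < U i a n w)%E)
          then 0 else 1)) / (#|S n w|)%:R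
  | None => 0
  end.

Definition sFCR d (T : measurableType d) (R : realType) (P : probability T R)
  (k : nat) (theta : 'I_k -> R) (L U : 'I_k -> R -> nat -> T -> \bar R)
  (S : nat -> T -> {set 'I_k}) (tau : T -> option nat) (a : R) : \bar R :=
  (\int[P]_w (FCP theta L U S tau a w)%:E)%E.

(* Main.v *)
Require Import Defs.
From HB Require Import structures.
From mathcomp Require Import all_boot all_order all_algebra.
From mathcomp Require Import all_classical all_reals all_analysis.
From mathcomp Require Import measurable_realfun.
From mathcomp Require Import ring lra.
Import Order.TTheory GRing.Theory Num.Theory.
Local Open Scope classical_set_scope.
Local Open Scope ring_scope.
Lemma mth_count (R : realType) (m : nat) (s : seq (\bar R)) :
  (1 <= m)%N -> (m <= size s)%N ->
  (m <= count (fun x => (mth_largest m s <= x)%E) s)%N.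
Proof.
move=> m1 ms.
set r := (fun x y : \bar R => (y <= x)%O).
have tr : transitive r by move=> x y z /= h1 h2; exact: le_trans h2 h1.
have rf : reflexive r by move=> x; exact: lexx.
have tot : total r by move=> x y; exact: le_total.
set s' := sort r s.
have ss : sorted r s' by exact: sort_sorted.
have sz : size s' = size s by rewrite size_sort.
rewrite /mth_largest -/r -/s'.
rewrite -(permP (permEl (perm_sort r s))) -/s'.
rewrite -[X in count _ X](cat_take_drop m s') count_cat.
apply: leq_trans (leq_addr _ _).
have -> : count (fun x => (nth -oo%E s' m.-1 <= x)%E) (take m s') = size (take m s').
  apply/eqP; rewrite -all_count; apply/(all_nthP -oo%E) => i.
  rewrite size_takel ?sz // => im.
  rewrite nth_take //.
  have := sorted_leq_nth tr rf -oo%E ss.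
  move=> /(_ i m.-1); rewrite !inE sz; apply.
  - exact: leq_trans im ms.
  - by rewrite (leq_trans _ ms) // prednK // ?leqnn // (leq_trans _ m1).
  - by rewrite -ltnS prednK // (leq_trans _ m1).
by rewrite size_takel ?sz //.
Qed.

Lemma SCS_card d (T : measurableType d) (R : realType) (k m : nat)
  (L U : 'I_k -> R -> nat -> T -> \bar R) (a : R) (w : T) :
  (1 <= m)%N -> (m <= k)%N ->
  (forall i b t w, (L i b t w <= U i b t w)%E) ->
  forall t, (m <= #|SCS m L U a t w|)%N.
Proof.
move=> m1 mk LU; elim=> [|t IH] /=.
  by rewrite cardsT card_ord.
set S := SCS m L U a t w.
set Lm := mth_largest m _.
set s1 := [seq i <- enum S | (Lm <= L i a t.+1 w)%E].
have c1 : (m <= size s1)%N.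
  rewrite size_filter.
  have H1 := (@mth_count R m [seq L i a t.+1 w | i <- enum S] m1).
  rewrite size_map -cardE in H1.
  by have := H1 IH; rewrite count_map.
apply: leq_trans c1 _; rewrite cardE; apply: uniq_leq_size.
  by rewrite filter_uniq // enum_uniq.
move=> i; rewrite mem_filter mem_enum => /andP[h iS].
rewrite mem_enum !inE iS andbT /= -leNgt.
exact: le_trans h (LU _ _ _ _).
Qed.

Lemma le_integral_nm d (T : measurableType d) (R : realType)
  (mu : {measure set T -> \bar R}) (f g : T -> \bar R) :
  (forall x, (0 <= f x)%E) -> (forall x, (f x <= g x)%E) ->
  (\int[mu]_x f x <= \int[mu]_x g x)%E.
Proof.
move=> f0 fg.
have g0 x : (0 <= g x)%E by exact: le_trans (f0 x) (fg x).
rewrite !ge0_integralTE //.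
apply: ge_ereal_sup => _ [h hf <-]; apply: ereal_sup_ubound; exists h => //.
by move=> x; exact: le_trans (hf x) (fg x).
Qed.

Lemma aB_bounds (R : realType) (k m : nat) (alpha : R) :
  (2 <= k)%N -> (1 <= m)%N -> (m <= k.-1)%N -> 0 < alpha < 1 ->
  0 < m%:R * alpha / (2 * k%:R) < 1.
Proof.
move=> k2 m1 mk /andP[a0 a1].
have k0 : 0 < 2 * k%:R :> R by rewrite mulr_gt0 // ltr0n (leq_trans _ k2).
have m0 : 1 <= m%:R :> R by rewrite ler1n.
have mk' : m%:R <= k%:R :> R.
  by rewrite ler_nat (leq_trans mk) // leq_pred.
apply/andP; split.
  by rewrite divr_gt0 // mulr_gt0 // (lt_le_trans _ m0).
rewrite ltr_pdivrMr // mul1r; nra.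
Qed.

Theorem theorem3 (d : measure_display) (T : measurableType d) (R : realType)
  (P : probability T R) (F : nat -> set (set T))
  (k m : nat) (theta : 'I_k -> R)
  (L U : 'I_k -> R -> nat -> T -> \bar R) :
  filtration F ->
  (2 <= k)%N -> (1 <= m)%N -> (m <= k.-1)%N ->
  (forall i j : 'I_k, (i <= j)%N -> theta j <= theta i) ->
  (forall i beta, adapted F (L i beta)) ->
  (forall i beta, adapted F (U i beta)) ->
  (forall i beta t w, (L i beta t w <= U i beta t w)%E) ->
  (forall i beta, 0 < beta < 1 ->
     (P [set w | exists t, (1 <= t)%N /\ ((theta i)%:E <= L i beta t w)%E]
        <= beta%:E)%E) ->
  (forall i beta, 0 < beta < 1 ->
     (P [set w | exists t, (1 <= t)%N /\ ((theta i)%:E >= U i beta t w)%E]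
        <= beta%:E)%E) ->
  forall (alpha : R), 0 < alpha < 1 ->
  forall tau : T -> option nat,
    stopping_time F tau ->
    P [set w | tau w = None] = 0%E ->
    let alpha_km := alpha / (2 * m%:R * (k%:R - m%:R)) in
    let alphaB := m%:R * alpha / (2 * k%:R) in
    (sFCR P theta L U (SCS m L U alpha_km) tau alphaB <= alpha%:E)%E.
Proof.
move=> [_ [Fm _]] k2 m1 mk _ adL adU LU hB hC alpha a01 tau [tau0 _] _.
cbv zeta.
set akm := alpha / _.
set aB := m%:R * alpha / _.
have aB01 : 0 < aB < 1 by exact: aB_bounds.
have mk' : (m <= k)%N by rewrite (leq_trans mk) // leq_pred.
pose B i := [set w | exists t, (1 <= t)%N /\ ((theta i)%:E <= L i aB t w)%E].
pose C i := [set w | exists t, (1 <= t)%N /\ ((theta i)%:E >= U i aB t w)%E].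
have mB i : measurable (B i).
  have -> : B i = \bigcup_t (if (1 <= t)%N then
      L i aB t @^-1` [set` Interval (BLeft (theta i)%:E) (BInfty _ false)]
      else set0).
    apply/seteqP; split => w /=.
      by move=> [t [t1 h]]; exists t => //; rewrite t1 /= in_itv /= andbT.
    move=> [t _]; case: ifP => // t1 /=; rewrite in_itv /= andbT => h.
    by exists t.
  apply: bigcupT_measurable => t; case: ifP => // _.
  by apply: Fm; apply: adL; exact: emeasurable_itv.
have mC i : measurable (C i).
  have -> : C i = \bigcup_t (if (1 <= t)%N then
      U i aB t @^-1` [set` Interval (BInfty _ true) (BRight (theta i)%:E)]
      else set0).
    apply/seteqP; split => w /=.
      by move=> [t [t1 h]]; exists t => //; rewrite t1 /= in_itv /=.
    move=> [t _]; case: ifP => // t1 /=; rewrite in_itv /= => h.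
    by exists t.
  apply: bigcupT_measurable => t; case: ifP => // _.
  by apply: Fm; apply: adU; exact: emeasurable_itv.
pose gg w := (m%:R^-1 * \sum_(i < k) (\1_(B i) w + \1_(C i) w)) : R.
have FCP0 w : 0 <= FCP theta L U (SCS m L U akm) tau aB w.
  rewrite /FCP; case: (tau w) => // n.
  apply: divr_ge0 => //; apply: sumr_ge0 => i _; by case: ifP.
have ind0 A x : 0 <= \1_A x :> R by rewrite indicE.
have FCPg w : FCP theta L U (SCS m L U akm) tau aB w <= gg w.
  rewrite /FCP /gg; case E: (tau w) => [n|]; last first.
    by rewrite mulr_ge0 ?invr_ge0 // sumr_ge0 // => i _; rewrite addr_ge0.
  have n1 : (1 <= n)%N by rewrite lt0n; apply/eqP => n0; apply: (tau0 w); rewrite E n0.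
  have cS := @SCS_card _ _ _ k m L U akm w m1 mk' LU n.
  set S := SCS m L U akm n w in cS *.
  pose c i := (if (L i aB n w < (theta i)%:E < U i aB n w)%E then 0 else 1) : R.
  have -> : (\sum_(i in S) (if (L i aB n w < (theta i)%:E < U i aB n w)%E then 0 else 1)) = \sum_(i in S) c i by [].
  have c0 i : 0 <= c i :> R by rewrite /c; case: ifP.
  have m0 : 0 < m%:R :> R by rewrite ltr0n.
  apply: (@le_trans _ _ ((\sum_(i in S) c i) * m%:R^-1)).
    apply: ler_wpM2l; first by apply: sumr_ge0.
    rewrite lef_pV2 ?posrE ?ler_nat // ltr0n (leq_trans m1) //.
  rewrite mulrC; apply: ler_wpM2l; first by rewrite invr_ge0 ltW.
  rewrite big_mkcond /=; apply: ler_sum => i _.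
  case: ifP => iS; last by rewrite addr_ge0.
  rewrite /c; case: ifP => cov; first by rewrite addr_ge0.
  move/negbT: cov; rewrite negb_and -!leNgt => /orP[h|h].
    rewrite [X in X + _]indicE mem_set ?ler_wpDr //; by exists n.
  rewrite [X in _ + X]indicE mem_set ?ler_wpDl //; by exists n.
rewrite /sFCR.
apply: le_trans (@le_integral_nm _ _ _ P
  (fun w => (FCP theta L U (SCS m L U akm) tau aB w)%:E)
  (fun w => (gg w)%:E) _ _) _.
- by move=> w; rewrite lee_fin.
- by move=> w; rewrite lee_fin.
have eqg x : ((gg x)%:E = (m%:R^-1)%:E *
    \sum_(i < k) ((\1_(B i) x)%:E + (\1_(C i) x)%:E))%E.
  by rewrite /gg EFinM sumEFin; congr (_ * _)%E; apply: eq_bigr => i _.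
have mh i : measurable_fun setT
    (fun x => ((\1_(B i) x)%:E + (\1_(C i) x)%:E)%E).
  by apply: emeasurable_funD; apply/measurable_EFinP; exact: measurable_indic.
have h0 i x : (0 <= (\1_(B i) x)%:E + (\1_(C i) x)%:E)%E.
  by apply: adde_ge0; rewrite lee_fin.
under eq_integral => x _ do rewrite eqg.
rewrite ge0_integralZl //; try (exact: emeasurable_sum);
  try (by move=> x _; apply: sume_ge0 => i _);
  try (by rewrite lee_fin invr_ge0).
rewrite ge0_integral_sum //.
have ib i : (\int[P]_x ((\1_(B i) x)%:E + (\1_(C i) x)%:E) <= (aB + aB)%:E)%E.
  rewrite ge0_integralD //; try (by move=> x _; rewrite lee_fin);
    try (by apply/measurable_EFinP; exact: measurable_indic).
  rewrite !integral_indic // !setIT EFinD.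
  by apply: leeD; [exact: hB | exact: hC].
apply: (@le_trans _ _ ((m%:R^-1)%:E * \sum_(i < k) (aB+aB)%:E)%E).
  apply: lee_wpmul2l; first by rewrite lee_fin invr_ge0.
  by apply: lee_sum => i _; exact: ib i.
rewrite sumEFin -EFinM lee_fin big_const_ord iter_addr addr0.
have mn0 : m%:R != 0 :> R by rewrite pnatr_eq0 -lt0n.
have kn0 : k%:R != 0 :> R by rewrite pnatr_eq0 -lt0n (leq_trans _ k2).
rewrite /aB -mulr_natr le_eqVlt; apply/orP; left; apply/eqP.
by field; rewrite kn0 mn0.
Qed.
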